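(* Let $L\in\{A_1,A_2,D_4,E_8\}$ and $m:=\dim L$. For every $n\in N(L):=\{\|z\|_2^m:z\in\overline{L}\setminus\{0\}\}$, there exists a lattice code in $\mathbb{R}^m/L$ of size $n$.
   Context: $A_n$ is the set of points of $\mathbb{Z}^{n+1}$ whose coordinates sum to zero, viewed as a lattice in the hyperplane $\{x\in\mathbb{R}^{n+1}:\sum_i x_i=0\}\cong\mathbb{R}^n$ (with induced Euclidean structure); $D_4$ is the set of points of $\mathbb{Z}^4$ whose coordinates sum to an even number; $E_8$ is the set of points of $\mathbb{Z}^8\cup(\mathbb{Z}+\tfrac12)^8$ whose coordinates sum to an even number. $\ell(L)$ is the smallest Euclidean norm of a nonzero vector of $L$ and $\overline{L}:=\ell(L)^{-1}L$. $\operatorname{CO}(m):=\{cQ:c>0,Q\in\operatorname{O}(m)\}$. A lattice code in $\mathbb{R}^m/L$ is a set $(TL)/L$ where $T\in\operatorname{CO}(m)$ is such that $L\subseteq TL$; its size is the index $|TL:L|$. *)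

(* Defs.v *)
From mathcomp Require Import all_boot all_order all_algebra.
From mathcomp Require Import reals.
Set Implicit Arguments. Unset Strict Implicit. Unset Printing Implicit Defensive.
Import Order.TTheory GRing.Theory Num.Theory.
Local Open Scope ring_scope.

Inductive lat := A1 | A2 | D4 | E8.

(* ambient coordinate dimension: A_n lives in R^(n+1) *)
Definition amb (L : lat) : nat :=
  match L with A1 => 2 | A2 => 3 | D4 => 4 | E8 => 8 end.

Definition ldim (L : lat) : nat :=
  match L with A1 => 1 | A2 => 2 | D4 => 4 | E8 => 8 end.

Section Defs.
Variable R : realType.

Definition dotv k (u v : 'rV[R]_k) : R := \sum_(i < k) u ord0 i * v ord0 i.
Definition normv k (u : 'rV[R]_k) : R := Num.sqrt (dotv u u).

Definition coord_sum k (x : 'rV[R]_k) : R := \sum_(i < k) x ord0 i.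

Definition intvec k (x : 'rV[R]_k) : Prop := forall i, x ord0 i \is a Num.int.
Definition halfvec k (x : 'rV[R]_k) : Prop :=
  forall i, x ord0 i - 2^-1 \is a Num.int.

Definition An_set k (x : 'rV[R]_k) : Prop := intvec x /\ coord_sum x = 0.
Definition D4_set (x : 'rV[R]_4) : Prop :=
  intvec x /\ (coord_sum x / 2) \is a Num.int.
Definition E8_set (x : 'rV[R]_8) : Prop :=
  (intvec x \/ halfvec x) /\ (coord_sum x / 2) \is a Num.int.

Definition lat_set (L : lat) : 'rV[R]_(amb L) -> Prop :=
  match L return 'rV[R]_(amb L) -> Prop with
  | A1 => @An_set 2 | A2 => @An_set 3 | D4 => D4_set | E8 => E8_set end.

(* the real span of L (the Euclidean space R^m in which L is a lattice):
   the hyperplane {sum x_i = 0} for A_n, the whole space otherwise *)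
Definition lat_space (L : lat) : 'rV[R]_(amb L) -> Prop :=
  match L return 'rV[R]_(amb L) -> Prop with
  | A1 => fun x => coord_sum x = 0 | A2 => fun x => coord_sum x = 0
  | D4 => fun _ => True | E8 => fun _ => True end.

Definition is_min_norm k (S : 'rV[R]_k -> Prop) (l : R) : Prop :=
  (exists2 z, S z & z != 0 /\ normv z = l) /\
  (forall z, S z -> z != 0 -> l <= normv z).

(* T (acting on row vectors x |-> x *m T) restricted to the space W is in
   CO(W): it maps W into W and scales all inner products by some c > 0 *)
Definition is_CO k (W : 'rV[R]_k -> Prop) (T : 'M[R]_k) : Prop :=
  (forall x, W x -> W (x *m T)) /\
  exists2 c : R, 0 < c &
    forall x y, W x -> W y -> dotv (x *m T) (y *m T) = c * dotv x y.

Definition img k (S : 'rV[R]_k -> Prop) (T : 'M[R]_k) (y : 'rV[R]_k) : Prop :=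
  exists2 x, S x & y = x *m T.

(* the index |M : S| of the subgroup S of M equals n: there are exactly n
   cosets of S in M (a list of n pairwise S-incongruent elements of M
   meeting every coset) *)
Definition index_eq k (M S : 'rV[R]_k -> Prop) (n : nat) : Prop :=
  exists s : seq 'rV[R]_k,
    [/\ size s = n,
        forall i, (i < n)%N -> M (nth 0 s i),
        forall i j, (i < n)%N -> (j < n)%N -> i <> j ->
          ~ S (nth 0 s i - nth 0 s j)
      & forall y, M y -> exists2 i, (i < n)%N & S (y - nth 0 s i)].

(* there is a lattice code (T L)/L in W/L of size n *)
Definition has_lattice_code k (W S : 'rV[R]_k -> Prop) (n : nat) : Prop :=
  exists T : 'M[R]_k,
    [/\ is_CO W T, (forall x, S x -> img S T x) & index_eq (img S T) S n].

End Defs.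

(* Main.v *)
Require Import Defs.
From mathcomp Require Import all_boot all_order all_algebra zify ring lra.
From mathcomp Require Import reals.
Set Implicit Arguments. Unset Strict Implicit. Unset Printing Implicit Defensive.
Import Order.TTheory GRing.Theory Num.Theory.
Local Open Scope ring_scope.

(* Proof outline:
   - int_index: for a nonsingular integer matrix A, Z^m / Z^m A has |det A|
     cosets (Smith normal form);
   - code_of: transfer to a similarity T of the lattice with TL/L of size |det A|;
   - main_gen: size computation via 2 A G A^T = q G (det A^2 = (q/2)^m);
   - per-lattice data: Eisenstein, Hurwitz-quaternion and octonion
     multiplication matrices in explicit lattice bases. *)

Lemma prodE m (g : 'I_m -> nat) : foldr muln 1%N [seq g x | x : 'I_m] = (\prod_i g i)%N.
Proof. by rewrite foldrE big_map big_enum. Qed.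

Lemma det_unit_int m (L : 'M[int]_m) : L \in unitmx -> `|\det L|%N = 1%N.
Proof.
rewrite unitmxE => /orP[] /eqP -> //.
Qed.

Lemma diag_eq m (d : seq int) :
  (\matrix_(i, j) (d`_i *+ (i == j :> nat)) : 'M[int]_m) = diag_mx (\row_(i < m) d`_i).
Proof. by apply/matrixP => i j; rewrite !mxE. Qed.


Lemma aux (d q : int) (a b : nat) : (a < absz d)%N -> (b < absz d)%N -> a%:Z - b%:Z = q * d -> a = b.
Proof. move=> ha hb E.
have [q0|[qp|qn]] : (q = 0 \/ 1 <= q \/ q <= -1)%R by lia.
- by move: E; rewrite q0 mul0r => /eqP; rewrite subr_eq0 => /eqP [].
- case: d ha hb E => n /= ha hb E; nia.
- case: d ha hb E => n /= ha hb E; nia.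
Qed.

Definition inlat m (A : 'M[int]_m) (v : 'rV[int]_m) := exists u, v = u *m A.

Lemma int_index m (A : 'M[int]_m) : \det A != 0 ->
  exists s : seq 'rV[int]_m, [/\ size s = `|\det A|%N,
   forall i j, (i < size s)%N -> (j < size s)%N -> i <> j -> ~ inlat A (nth 0 s i - nth 0 s j)
 & forall x, exists2 i, (i < size s)%N & inlat A (x - nth 0 s i)].
Proof.
move=> dA.
have [L Lu [Rm Ru [d _ eA]]] := int_Smith_normal_form A.
rewrite diag_eq in eA.
set e := fun i : 'I_m => absz (d`_i).
have detA : `|\det A|%N = (\prod_i e i)%N.
  rewrite eA !det_mulmx det_diag !abszM det_unit_int // det_unit_int // mul1n muln1.
  by rewrite (big_morph absz (@abszM) (erefl _)); apply: eq_bigr => i _; rewrite mxE.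
have e_gt0 i : (0 < e i)%N.
  rewrite lt0n; apply/negP => /eqP e0.
  move: dA; rewrite -absz_eq0 detA; apply/negP; rewrite negbK.
  by rewrite (bigD1 i) //= e0.
pose fT := {dffun forall i : 'I_m, 'I_(e i)}.
pose rep (f : fT) : 'rV[int]_m := (\row_i ((f i : nat)%:Z)) *m Rm.
pose f0 : fT := finfun (fun i => Ordinal (e_gt0 i)).
exists [seq rep f | f <- enum fT].
have Rinv : Rm *m invmx Rm = 1%:M by rewrite mulmxV.
have Linv : invmx L *m L = 1%:M by rewrite mulVmx.
split.
- by rewrite size_map -cardE card_dep_ffun detA -prodE; congr foldr; apply: eq_map => i; rewrite card_ord.
- move=> i j; rewrite size_map => ilt jlt ij [u].
  rewrite (nth_map f0 _ _ ilt) (nth_map f0 _ _ jlt).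
  set f := nth _ _ i; set g := nth _ _ j => E.
  have fg : f != g.
    by rewrite nth_uniq ?enum_uniq //; apply/eqP.
  case/negP: fg; apply/eqP/ffunP => k; apply/val_inj => /=.
  have E2 : \row_i ((f i : nat)%:Z) - \row_i ((g i : nat)%:Z) = (u *m L) *m
      diag_mx (\row_(i < m) d`_i).
    move: E; rewrite /rep -mulmxBl eA !mulmxA => /(congr1 (mulmx^~ (invmx Rm))).
    by rewrite -!mulmxA Rinv !mulmx1.
  have := congr1 (fun M : 'rV[int]_m => M 0 k) E2.
  rewrite mul_mx_diag !mxE => Ek.
  have dv : (d`_k %| (f k : nat)%:Z - (g k : nat)%:Z)%Z by rewrite Ek dvdz_mull.
  have hf : (f k < e k)%N := ltn_ord _.
  have hg : (g k < e k)%N := ltn_ord _.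
  by case/dvdzP: dv => q /(aux hf hg).
- move=> x.
  have Rinv' : invmx Rm *m Rm = 1%:M by rewrite mulVmx.
  set y := x *m invmx Rm.
  have hx : x = y *m Rm by rewrite /y -mulmxA Rinv' mulmx1.
  clearbody y.
  have dnz (i : 'I_m) : d`_i != 0 by have := e_gt0 i; rewrite lt0n absz_eq0.
  have lt (i : 'I_m) : (absz (y ord0 i %% d`_i)%Z < e i)%N.
    by rewrite -ltz_nat gez0_abs ?modz_ge0 // ltz_mod.
  pose f : fT := finfun (fun i => Ordinal (lt i)).
  exists (index f (enum fT)); first by rewrite size_map index_mem mem_enum.
  rewrite (nth_map f0) ?index_mem ?mem_enum // nth_index ?mem_enum //.
  exists ((\row_i (y ord0 i %/ d`_i)%Z) *m invmx L).
  rewrite eA !mulmxA -[_ *m invmx L *m L]mulmxA Linv mulmx1.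
  rewrite hx.
  rewrite /rep -mulmxBl; congr (_ *m _).
  apply/rowP => i; rewrite mul_mx_diag !mxE ffunE /= gez0_abs ?modz_ge0 //.
  by rewrite {1}(divz_eq (y ord0 i) d`_i) addrK.
Qed.


Section P2.
Variable R : realType.
Notation ZR := (map_mx (intr : int -> R)).

Lemma dotvE k (u v : 'rV[R]_k) : dotv u v = (u *m v^T) ord0 ord0.
Proof. by rewrite /dotv mxE; apply: eq_bigr => i _; rewrite mxE. Qed.

Lemma ZR_inj m n (a b : 'M[int]_(m,n)) : ZR a = ZR b -> a = b.
Proof.
move=> E; apply/matrixP => i j.
by have := congr1 (fun M : 'M[R]_(m,n) => M i j) E; rewrite !mxE => /intr_inj.
Qed.

Lemma code_of k m (S W : 'rV[R]_k -> Prop) (B : 'M[R]_(m,k)) (Bp : 'M[R]_(k,m))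
  (A : 'M[int]_m) (c : R) :
 (forall x, S x <-> exists u : 'rV[int]_m, x = ZR u *m B) ->
 B *m Bp = 1%:M ->
 (forall y, W (y *m B)) ->
 (forall x, W x -> x *m Bp *m B = x) ->
 \det A != 0 ->
 0 < c ->
 ZR A *m (B *m B^T) *m (ZR A)^T = c *: (B *m B^T) ->
 has_lattice_code W S `|\det A|%N.
Proof.
move=> hS hBBp hWB hWP dA c0 hG.
have Au : ZR A \in unitmx by rewrite unitmxE det_map_mx unitfE intr_eq0.
set V := invmx (ZR A).
have AV : ZR A *m V = 1%:M by rewrite mulmxV.
have VA : V *m ZR A = 1%:M by rewrite mulVmx.
set T := Bp *m V *m B + (1%:M - Bp *m B).
have key x : W x -> x *m T = x *m Bp *m V *m B.
  move=> Wx; rewrite /T mulmxDr mulmxBr mulmx1 !mulmxA hWP // subrr addr0 //.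
have keyS (u : 'rV[int]_m) : ZR u *m B *m T = ZR u *m V *m B.
  by rewrite key // -(mulmxA _ B Bp) hBBp mulmx1.
have VGV : V *m (B *m B^T) *m V^T = c^-1 *: (B *m B^T).
  have := congr1 (fun X => V *m X *m V^T) hG.
  rewrite !mulmxA VA mul1mx -!mulmxA -trmx_mul VA trmx1 mulmx1 => E.
  move: E; rewrite -scalemxAl scalemxAr !mulmxA => E.
  by rewrite [in RHS]E -scalemxAr scalerA mulVf ?gt_eqF // scale1r.
exists T; split.
- split; first by move=> x Wx; rewrite key // hWB.
  exists c^-1; first by rewrite invr_gt0.
  move=> x y Wx Wy; rewrite !dotvE key // key //.
  have -> : (x *m Bp *m V *m B) *m (y *m Bp *m V *m B)^T =
     (x *m Bp) *m (V *m (B *m B^T) *m V^T) *m (y *m Bp)^T by rewrite !trmx_mul !mulmxA.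
  rewrite VGV -scalemxAr -scalemxAl mxE; congr (_ * _).
  by rewrite -[in RHS](hWP x Wx) -[in RHS](hWP y Wy) !trmx_mul !mulmxA.
- move=> x /hS [u ->]; exists (ZR (u *m A) *m B); first by apply/hS; exists (u *m A).
  by rewrite keyS map_mxM -(mulmxA (ZR u)) AV mulmx1.
- have [s [sz sd sc]] := int_index dA.
  exists [seq ZR r *m V *m B | r <- s]; split.
  + by rewrite size_map.
  + move=> i ilt; rewrite (nth_map 0) ?sz //.
    by exists (ZR s`_i *m B); [apply/hS; exists s`_i | rewrite keyS].
  + move=> i j ilt jlt ij /hS [u E]; apply: (sd i j) => //; try by rewrite sz.
    exists u; apply: ZR_inj.
    move: E; rewrite !(nth_map 0) ?sz // -mulmxBl => /(congr1 (mulmx^~ Bp)).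
    rewrite map_mxB map_mxM -!mulmxA hBBp !mulmx1 => /(congr1 (mulmx^~ (ZR A))).
    by rewrite -mulmxBl -!mulmxA VA !mulmx1.
  + move=> y [x /hS [x0 ->] ->].
    have [i ilt [u E]] := sc x0; rewrite sz in ilt.
    exists i => //; apply/hS; exists u.
    rewrite keyS (nth_map 0) ?sz // -mulmxBl -mulmxBl -map_mxB E map_mxM.
    by rewrite -(mulmxA (ZR u)) AV mulmx1.
Qed.
End P2.


Definition mxn (T : Type) m n (f : nat -> nat -> T) : 'M[T]_(m,n) := \matrix_(i,j) f i j.
Fixpoint nsum (T : nmodType) (n : nat) (F : nat -> T) : T :=
  match n with 0 => 0 | S n => nsum n F + F n end.
Lemma nsumE (T : nmodType) n (F : nat -> T) : \sum_(k < n) F k = nsum n F.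
Proof. by elim: n => [|n IH]; rewrite ?big_ord0 // big_ord_recr /= IH. Qed.
Lemma mxn_mul (T : pzRingType) m n p (f g : nat -> nat -> T) :
  mxn m n f *m mxn n p g = mxn m p (fun i j => nsum n (fun k => f i k * g k j)).
Proof. by apply/matrixP => i j; rewrite !mxE -nsumE; apply: eq_bigr => k _; rewrite !mxE. Qed.
Lemma mxn_tr (T : Type) m n (f : nat -> nat -> T) : (mxn m n f)^T = mxn n m (fun i j => f j i).
Proof. by apply/matrixP => i j; rewrite !mxE. Qed.
Lemma mxn_scale (T : pzRingType) m n a (f : nat -> nat -> T) : a *: mxn m n f = mxn m n (fun i j => a * f i j).
Proof. by apply/matrixP => i j; rewrite !mxE. Qed.
Lemma mxn_eq (T : Type) m n (f g : nat -> nat -> T) :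
  (forall i j, (i < m)%N -> (j < n)%N -> f i j = g i j) -> mxn m n f = mxn m n g.
Proof. by move=> H; apply/matrixP => i j; rewrite !mxE H. Qed.

Section P3.
Variable R : realType.
Notation ZR := (map_mx (intr : int -> R)).

Lemma main_gen k m (S W : 'rV[R]_k -> Prop) (B : 'M[R]_(m,k)) (Bp : 'M[R]_(k,m))
  (g : nat -> nat -> int) (af : (nat -> int) -> nat -> nat -> int) (l : R) :
 (0 < m)%N ->
 (forall x, S x <-> exists u : 'rV[int]_m, x = ZR u *m B) ->
 B *m Bp = 1%:M -> (forall y, W (y *m B)) -> (forall x, W x -> x *m Bp *m B = x) ->
 ZR (mxn m m g) = B *m B^T ->
 (forall w, 2%:Z *: (mxn m m (af w) *m mxn m m g *m (mxn m m (af w))^T) =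
    nsum m (fun i => nsum m (fun j => w i * g i j * w j)) *: mxn m m g) ->
 \det (mxn m m g) != 0 ->
 (forall z, S z -> z != 0 -> 2 <= dotv z z) ->
 (exists p, (p < m)%N /\ g p p = 2) ->
 is_min_norm S l ->
 forall z, S z -> z != 0 ->
   exists2 n : nat, (n%:R : R) = (normv z / l) ^+ m & has_lattice_code W S n.
Proof.
move=> m0 hS hBBp hWB hWP hGB hid dG hmin2 [p [pm gp]] [[z0 Sz0 [nz0 hz0]] hmin] z Sz nz.
set G := mxn m m g.
have dotZ (u : 'rV[int]_m) : dotv (ZR u *m B) (ZR u *m B) = ((u *m G *m u^T) ord0 ord0)%:~R.
  rewrite dotvE trmx_mul map_trmx mulmxA -(mulmxA _ B) -hGB -!map_mxM mxE //.
have l2 : l = Num.sqrt 2.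
  pose e : 'rV[int]_m := delta_mx ord0 (Ordinal pm).
  have dq : ((e *m G *m (e)^T) ord0 ord0) = 2.
    by rewrite /e -rowE trmx_delta -colE /col /row !mxE /= gp.
  have hp : (ZR (e) *m B) != 0.
    apply/negP => /eqP E; have := dotZ (e).
    rewrite E /dotv big1 => [|i _]; last by rewrite mxE mul0r.
    by rewrite dq => /eqP; rewrite eq_sym intr_eq0.
  apply/eqP; rewrite eq_le; apply/andP; split.
    have := hmin _ (proj2 (hS _) (ex_intro _ _ erefl)) hp; rewrite /normv dotZ.
    by rewrite dq.
  by rewrite -hz0 /normv ler_sqrt ?hmin2 //; apply: le_trans (hmin2 _ Sz0 nz0).
case/hS: (Sz) => u zE.
pose wf := fun p : nat => if (insub p : option 'I_m) is Some i then u ord0 i else 0.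
have wfE (i : 'I_m) : wf i = u ord0 i by rewrite /wf valK.
set A := mxn m m (af wf).
set q := nsum m (fun i => nsum m (fun j => wf i * g i j * wf j)).
have qE : (u *m G *m u^T) ord0 ord0 = q.
  have -> : q = \sum_(i < m) \sum_(j < m) wf i * g i j * wf j.
    by rewrite /q -nsumE; apply: eq_bigr => i _; rewrite -(@nsumE _ m (fun j : nat => wf i * g i j * wf j)).
  rewrite exchange_big mxE; apply: eq_bigr => j _; rewrite mxE big_distrl.
  by apply: eq_bigr => i _; rewrite !mxE !wfE.
have dA2 : \det A ^+ 2 * 2%:Z ^+ m = q ^+ m.
  have := congr1 determinant (hid wf); rewrite detZ !det_mulmx det_tr detZ -/G -/A.
  move=> E; apply: (mulIf dG); rewrite -E; ring.
have q0 : 0 < q.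
  have := hmin2 _ Sz nz; rewrite zE dotZ qE => h.
  by apply: lt_le_trans (_ : 0 < 2) _ => //; rewrite -(ler_int R).
have dA : \det A != 0.
  apply/negP => /eqP d0; move: dA2; rewrite d0 expr0n /= mul0r => /esym /eqP.
  by rewrite expf_eq0 gt_eqF // andbF.
set c : R := q%:~R / 2.
have hG : ZR A *m (B *m B^T) *m (ZR A)^T = c *: (B *m B^T).
  rewrite -hGB; have := congr1 ZR (hid wf); rewrite !map_mxZ !map_mxM -map_trmx -/G -/A -/q.
  move=> E; have {}E : 2 *: (ZR A *m ZR G *m (ZR A)^T) = q%:~R *: ZR G by exact: E.
  apply: (@scalerI _ _ (2 : R)); first by rewrite pnatr_eq0.
  by rewrite E scalerA /c mulrC divfK // pnatr_eq0.
have code := code_of hS hBBp hWB hWP dA (_ : 0 < c) hG.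
exists `|\det A|%N; last by apply: code; rewrite /c divr_gt0 // ltr0z.
rewrite l2; apply/eqP; rewrite -(@eqrXn2 _ 2) // ?exprn_ge0 ?divr_ge0 ?sqrtr_ge0 //.
rewrite natr_absz intr_norm real_normK ?num_real // -exprAC expr_div_n /normv zE dotZ qE.
rewrite !sqr_sqrtr ?ler0z ?ltW // expr_div_n; apply/eqP.
have := congr1 (intr : int -> R) dA2; rewrite rmorphM !rmorphXn /= => <-.
by rewrite -mulrA mulfV ?mulr1 // expf_neq0 // intr_eq0.
Qed.
End P3.


Lemma ev_int (n : int) : (2 %| n * n - n)%Z.
Proof.
apply/dvdzP; have [a [->|->]] : exists a, n = 2 * a \/ n = 2 * a + 1.
  exists (n %/ 2)%Z; have := divz_eq n 2; have := modz_ge0 n (isT : (2:int) != 0);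
  have := ltz_pmod n (isT : (0:int) < 2); lia.
- by exists (2 * a * a - a); ring.
- by exists (2 * a * a + a); ring.
Qed.

Lemma int_even_min k (v : 'rV[int]_k) t i :
  \sum_j v ord0 j = 2 * t -> v ord0 i != 0 -> 2 <= \sum_j v ord0 j * v ord0 j.
Proof.
move=> hs hi.
have : (2 %| \sum_j (v ord0 j * v ord0 j - v ord0 j))%Z.
  by apply: rpred_sum => j _; apply: ev_int.
rewrite sumrB hs => /dvdzP [r hr].
have h1 : 1 <= \sum_j v ord0 j * v ord0 j.
  rewrite (bigD1 i) //=.
  have r0 : 0 <= \sum_(j | j != i) v ord0 j * v ord0 j.
    by apply: sumr_ge0 => j _; rewrite -expr2 sqr_ge0.
  move: hi r0; set a := v ord0 i; set b := \sum_(j | _) _ => hi r0.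
  have : a * a > 0.
    by case: (ltrgtP a 0) hi => // h _; [rewrite nmulr_rgt0 | rewrite mulr_gt0].
  lia.
clear hs; move: hr h1; move: (\sum_(j < k) v ord0 j * v ord0 j) t r => S t0 r0 hr h1 /=; lia.
Qed.

Section P4.
Variable R : realType.
Notation ZR := (map_mx (intr : int -> R)).

Lemma toZ k (x : 'rV[R]_k) : intvec x -> exists v : 'rV[int]_k, x = ZR v.
Proof.
move=> hx; exists (map_mx (fun r => Num.floor r) x).
by apply/rowP => j; rewrite !mxE floorK // hx.
Qed.

Lemma even_min k (x : 'rV[R]_k) :
  intvec x -> coord_sum x / 2 \is a Num.int -> x != 0 -> 2 <= dotv x x.
Proof.
move=> /toZ [v ->] /intrP [t ht] nz.
have [i vi] : exists i, v ord0 i != 0.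
  apply/existsP; apply: contraNT nz; rewrite negb_exists => /forallP h.
  apply/eqP/rowP => j; rewrite !mxE; have := h j; rewrite negbK => /eqP ->.
  by [].
have hs : \sum_j v ord0 j = 2 * t.
  apply: (@intr_inj R); move: ht; rewrite /coord_sum.
  under eq_bigr do rewrite mxE.
  rewrite -rmorph_sum /= => ht; rewrite rmorphM /= -ht; by field.
have := int_even_min hs vi; rewrite -(ler_int R) /dotv => h.
apply: le_trans h _; rewrite rmorph_sum /=; rewrite le_eqVlt; apply/orP; left; apply/eqP/eq_bigr => j _.
by rewrite !mxE rmorphM.
Qed.

End P4.


Ltac natcase n H := move: n H; case => [|[|[|[|[|[|[|[|n]]]]]]]] // H.

Section P5.
Variable R : realType.
Notation ZR := (map_mx (intr : int -> R)).

Lemma rowE_mxn k (x : 'rV[R]_k.+1) : x = mxn 1 k.+1 (fun _ j => x ord0 (inord j)).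
Proof. by apply/rowP => j; rewrite mxE inord_val. Qed.
Lemma rowE_mxnZ k (x : 'rV[int]_k.+1) : x = mxn 1 k.+1 (fun _ j => x ord0 (inord j)).
Proof. by apply/rowP => j; rewrite mxE inord_val. Qed.
Lemma ZR_mxn m n f : ZR (mxn m n f) = mxn m n (fun i j => (f i j)%:~R).
Proof. by apply/matrixP => i j; rewrite !mxE. Qed.
Lemma coord_sum_mxn k f : coord_sum (mxn 1 k f : 'rV[R]_k) = nsum k (f 0%N).
Proof. by rewrite /coord_sum -nsumE; apply: eq_bigr => j _; rewrite mxE. Qed.
Lemma one_mxn n : (1%:M : 'M[R]_n) = mxn n n (fun i j => if i == j then 1 else 0).
Proof. by apply/matrixP => i j; rewrite !mxE -val_eqE; case: eqP. Qed.

Lemma detG_nz m (G : 'M[int]_m) (H : 'M[R]_m) : ZR G *m H = 1%:M -> \det G != 0.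
Proof.
move=> /(congr1 determinant); rewrite det_mulmx det1 det_map_mx => E.
by apply/eqP => d0; move: E; rewrite d0 mul0r => /eqP; rewrite eq_sym oner_eq0.
Qed.

Lemma intvec_ZR k (v : 'rV[int]_k) : intvec (ZR v).
Proof. by move=> i; rewrite mxE intr_int. Qed.

Lemma intvec_mul k m (x : 'rV[R]_k) (M : 'M[int]_(k,m)) : intvec x -> intvec (x *m ZR M).
Proof.
move=> hx i; rewrite mxE; apply: rpred_sum => j _; apply: rpredM; first exact: hx.
by rewrite mxE intr_int.
Qed.

Definition bi1 (i j : nat) : int := if j == 0%N then 1 else -1.
Definition bpi1 (i j : nat) : int := if i == 0%N then 1 else 0.
Definition g1 (i j : nat) : int := 2.
Definition af1 (w : nat -> int) (i j : nat) : int := w 0%N.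
Definition B1 : 'M[R]_(1,2) := ZR (mxn 1 2 bi1).
Definition Bp1 : 'M[R]_(2,1) := ZR (mxn 2 1 bpi1).

Lemma A1_facts :
 [/\ (forall x, An_set x <-> exists u : 'rV[int]_1, x = ZR u *m B1),
     B1 *m Bp1 = 1%:M, (forall y, coord_sum (y *m B1) = 0),
     (forall x, coord_sum x = 0 -> x *m Bp1 *m B1 = x) &
     [/\ ZR (mxn 1 1 g1) = B1 *m B1^T, (forall w, 2%:Z *: (mxn 1 1 (af1 w) *m mxn 1 1 g1 *m (mxn 1 1 (af1 w))^T) =
       nsum 1 (fun i => nsum 1 (fun j => w i * g1 i j * w j)) *: mxn 1 1 g1),
       \det (mxn 1 1 g1) != 0 & (exists p, (p < 1)%N /\ g1 p p = 2)]].
Proof.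
have hWB (y : 'rV[R]_1) : coord_sum (y *m B1) = 0.
  rewrite (rowE_mxn y) /B1 ZR_mxn mxn_mul coord_sum_mxn.
  cbv beta iota delta [nsum bi1] => /=; ring.
have hWP (x : 'rV[R]_2) : coord_sum x = 0 -> x *m Bp1 *m B1 = x.
  rewrite (rowE_mxn x) coord_sum_mxn /Bp1 /B1 !ZR_mxn !mxn_mul => hs.
  apply: mxn_eq => i j Hi Hj; natcase i Hi; natcase j Hj;
  move: hs; cbv beta iota delta [nsum bi1 bpi1] => /= hs; lra.
split => //.
- move=> x; split.
  + case=> hi hs; have [v hv] := toZ (intvec_mul (mxn 2 1 bpi1) hi).
    by exists v; rewrite -hv hWP.
  + case=> u ->; split; last exact: hWB.
    by rewrite /B1 -map_mxM; exact: intvec_ZR.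
- rewrite /B1 /Bp1 -map_mxM mxn_mul one_mxn ZR_mxn; apply: mxn_eq => i j Hi Hj.
  by natcase i Hi; natcase j Hj; cbv beta iota delta [nsum bi1 bpi1].
split.
- rewrite /B1 map_trmx -map_mxM mxn_tr mxn_mul; congr ZR; apply: mxn_eq => i j Hi Hj.
- move=> w; rewrite mxn_tr !mxn_mul !mxn_scale; apply: mxn_eq => i j Hi Hj.
  natcase i Hi; natcase j Hj; cbv beta iota delta [nsum af1 g1]; ring.
- apply: (@detG_nz _ _ (mxn 1 1 (fun _ _ => 2^-1))).
  rewrite ZR_mxn mxn_mul one_mxn; apply: mxn_eq => i j Hi Hj.
  natcase i Hi; natcase j Hj; cbv beta iota delta [nsum g1] => /=.
  by rewrite add0r mulrC mulVf // pnatr_eq0.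
- by exists 0%N.
Qed.


Definition bi2 (i j : nat) : int :=
  match i, j with 0,0 => 1 | 0,1 => -1 | 1,1 => 1 | 1,2 => -1 | _,_ => 0 end.
Definition bpi2 (i j : nat) : int :=
  match i, j with 0,0 => 1 | 2,1 => -1 | _,_ => 0 end.
Definition g2 (i j : nat) : int := if i == j then 2 else -1.
Definition af2 (w : nat -> int) (i j : nat) : int :=
  match i, j with 0,0 => w 0%N | 0,1 => w 1%N | 1,0 => - w 1%N | 1,1 => w 0%N - w 1%N | _,_ => 0 end.
Definition B2 : 'M[R]_(2,3) := ZR (mxn 2 3 bi2).
Definition Bp2 : 'M[R]_(3,2) := ZR (mxn 3 2 bpi2).

Lemma A2_facts :
 [/\ (forall x, An_set x <-> exists u : 'rV[int]_2, x = ZR u *m B2),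
     B2 *m Bp2 = 1%:M, (forall y, coord_sum (y *m B2) = 0),
     (forall x, coord_sum x = 0 -> x *m Bp2 *m B2 = x) &
     [/\ ZR (mxn 2 2 g2) = B2 *m B2^T, (forall w, 2%:Z *: (mxn 2 2 (af2 w) *m mxn 2 2 g2 *m (mxn 2 2 (af2 w))^T) =
       nsum 2 (fun i => nsum 2 (fun j => w i * g2 i j * w j)) *: mxn 2 2 g2),
       \det (mxn 2 2 g2) != 0 & (exists p, (p < 2)%N /\ g2 p p = 2)]].
Proof.
have hWB (y : 'rV[R]_2) : coord_sum (y *m B2) = 0.
  rewrite (rowE_mxn y) /B2 ZR_mxn mxn_mul coord_sum_mxn.
  cbv beta iota delta [nsum bi2] => /=; ring.
have hWP (x : 'rV[R]_3) : coord_sum x = 0 -> x *m Bp2 *m B2 = x.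
  rewrite (rowE_mxn x) coord_sum_mxn /Bp2 /B2 !ZR_mxn !mxn_mul => hs.
  apply: mxn_eq => i j Hi Hj; natcase i Hi; natcase j Hj;
  move: hs; cbv beta iota delta [nsum bi2 bpi2] => /= hs; lra.
split => //.
- move=> x; split.
  + case=> hi hs; have [v hv] := toZ (intvec_mul (mxn 3 2 bpi2) hi).
    by exists v; rewrite -hv hWP.
  + case=> u ->; split; last exact: hWB.
    by rewrite /B2 -map_mxM; exact: intvec_ZR.
- rewrite /B2 /Bp2 -map_mxM mxn_mul one_mxn ZR_mxn; apply: mxn_eq => i j Hi Hj.
  by natcase i Hi; natcase j Hj; cbv beta iota delta [nsum bi2 bpi2].
split.
- rewrite /B2 map_trmx -map_mxM mxn_tr mxn_mul; congr ZR; apply: mxn_eq => i j Hi Hj.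
  by natcase i Hi; natcase j Hj.
- move=> w; rewrite mxn_tr !mxn_mul !mxn_scale; apply: mxn_eq => i j Hi Hj.
  natcase i Hi; natcase j Hj; cbv beta iota delta [nsum af2 g2] => /=; ring.
- apply: (@detG_nz _ _ (mxn 2 2 (fun i j => if i == j then 2 / 3 else 1 / 3))).
  rewrite ZR_mxn mxn_mul one_mxn; apply: mxn_eq => i j Hi Hj.
  natcase i Hi; natcase j Hj; cbv beta iota delta [nsum g2] => /=; by field.
- by exists 0%N.
Qed.

Lemma detG_sq n (G : 'M[int]_n) (B Bp : 'M[R]_n) :
  ZR G = B *m B^T -> B *m Bp = 1%:M -> \det G != 0.
Proof.
move=> hG hB; apply: (@detG_nz _ _ (Bp^T *m Bp)).
by rewrite hG -mulmxA (mulmxA B^T) -trmx_mul (mulmx1C hB) trmx1 mul1mx hB.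
Qed.

Definition a4 (w : nat -> int) (i j : nat) : int :=
  match i, j with
  | 0, 0 => w 1 + w 3
  | 0, 1 => - 2%:Z * w 0 + 2%:Z * w 1 + w 2 + w 3
  | 0, 2 => w 2 + w 3
  | 0, 3 => - w 2 + w 3
  | 1, 0 => w 0 - w 1 - w 3
  | 1, 1 => 2%:Z * w 0 - w 1 - w 2 - w 3
  | 1, 2 => - w 3
  | 1, 3 => w 2
  | 2, 0 => w 0 - w 1 - w 2 - w 3
  | 2, 1 => w 0 - w 1 - w 2
  | 2, 2 => w 0 - w 2 - w 3
  | 2, 3 => w 0 - w 1 - w 3
  | 3, 0 => - w 3
  | 3, 1 => w 0 - w 1 - w 2 - w 3
  | 3, 2 => - w 0 + w 1
  | 3, 3 => w 0 - w 3
  | _, _ => 0 end.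
Definition g4 (i j : nat) : int :=
  match i, j with
  | 0, 0 => 4
  | 0, 1 => -2
  | 0, 2 => -2
  | 0, 3 => -2
  | 1, 0 => -2
  | 1, 1 => 2
  | 1, 2 => 1
  | 1, 3 => 1
  | 2, 0 => -2
  | 2, 1 => 1
  | 2, 2 => 2
  | 2, 3 => 1
  | 3, 0 => -2
  | 3, 1 => 1
  | 3, 2 => 1
  | 3, 3 => 2
  | _, _ => 0 end.

Definition bi4 (i j : nat) : int :=
  if i == 0%N then (if j == 0%N then 2 else 0)
  else if j == i then 1 else if j == 0%N then -1 else 0.
Definition bp4 (i j : nat) : R := if j == 0%N then 2^-1 else if i == j then 1 else 0.
Definition B4 : 'M[R]_4 := ZR (mxn 4 4 bi4).
Definition Bp4 : 'M[R]_4 := mxn 4 4 bp4.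

Lemma D4_facts :
 [/\ (forall x, D4_set x <-> exists u : 'rV[int]_4, x = ZR u *m B4),
     B4 *m Bp4 = 1%:M, (forall x : 'rV[R]_4, x *m Bp4 *m B4 = x) &
     [/\ ZR (mxn 4 4 g4) = B4 *m B4^T, (forall w, 2%:Z *: (mxn 4 4 (a4 w) *m mxn 4 4 g4 *m (mxn 4 4 (a4 w))^T) =
       nsum 4 (fun i => nsum 4 (fun j => w i * g4 i j * w j)) *: mxn 4 4 g4),
       \det (mxn 4 4 g4) != 0 & (exists p, (p < 4)%N /\ g4 p p = 2)]].
Proof.
have hBBp : B4 *m Bp4 = 1%:M.
  rewrite /B4 /Bp4 ZR_mxn mxn_mul one_mxn; apply: mxn_eq => i j Hi Hj.
  natcase i Hi; natcase j Hj; cbv beta iota delta [nsum bi4 bp4] => /=; by field.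
have hWP (x : 'rV[R]_4) : x *m Bp4 *m B4 = x by rewrite -mulmxA (mulmx1C hBBp) mulmx1.
have hG : ZR (mxn 4 4 g4) = B4 *m B4^T.
  rewrite /B4 map_trmx -map_mxM mxn_tr mxn_mul; congr ZR; apply: mxn_eq => i j Hi Hj.
  by natcase i Hi; natcase j Hj.
split => //.
- move=> x; split.
  + case=> hi hs.
    pose X := fun j => x ord0 (inord j).
    have hx : x = mxn 1 4 (fun _ j => X j) := rowE_mxn x.
    have hcs : coord_sum x = nsum 4 X by rewrite [in LHS]hx coord_sum_mxn.
    have xB : x *m Bp4 = mxn 1 4 (fun _ j => if j == 0%N then coord_sum x / 2 else X j).
      rewrite hcs [in LHS]hx /Bp4 mxn_mul; apply: mxn_eq => i j Hi Hj.
      natcase i Hi; natcase j Hj; cbv beta iota delta [nsum bp4] => /=; ring.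
    have [v hv] : exists v, x *m Bp4 = ZR v.
      apply: toZ; rewrite xB => j; rewrite mxE; case: eqP => _ //.
      exact: hi.
    by exists v; rewrite -hv hWP.
  + case=> u ->; split; first by rewrite /B4 -map_mxM; exact: intvec_ZR.
    rewrite (rowE_mxnZ u) /B4 !ZR_mxn mxn_mul coord_sum_mxn.
    apply/intrP; exists (u ord0 (inord 0)).
    cbv beta iota delta [nsum bi4] => /=; by field.
split => //.
- move=> w; rewrite mxn_tr !mxn_mul !mxn_scale; apply: mxn_eq => i j Hi Hj.
  natcase i Hi; natcase j Hj; cbv beta iota delta [nsum a4 g4] => /=; ring.
- exact: detG_sq hG hBBp.
- by exists 1%N.
Qed.

Definition a8 (w : nat -> int) (i j : nat) : int :=
  match i, j with
  | 0, 0 => w 1 + w 3 + w 5 + 4%:Z * w 6 + 2%:Z * w 7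
  | 0, 1 => - 2%:Z * w 0 + 2%:Z * w 1 + w 2 + w 3 + w 4 + w 5 + 2%:Z * w 6
  | 0, 2 => w 2 + w 3 + w 6 + w 7
  | 0, 3 => - w 2 + w 3 + w 6
  | 0, 4 => w 4 + w 5 + w 6 + w 7
  | 0, 5 => - w 4 + w 5 + w 6
  | 0, 6 => 2%:Z * w 6 + w 7
  | 0, 7 => - 2%:Z * w 6
  | 1, 0 => w 0 - w 1 - w 3 - w 5 - 4%:Z * w 6 - 2%:Z * w 7
  | 1, 1 => 2%:Z * w 0 - w 1 - w 2 - w 3 - w 4 - w 5 - 2%:Z * w 6
  | 1, 2 => - w 3 - w 6 - w 7
  | 1, 3 => w 2 - w 6
  | 1, 4 => - w 5 - w 6 - w 7
  | 1, 5 => w 4 - w 6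
  | 1, 6 => - w 6 - w 7
  | 1, 7 => 2%:Z * w 6 + w 7
  | 2, 0 => w 0 - w 1 - w 2 - w 3 - 2%:Z * w 4 + w 5 - 3%:Z * w 6 - w 7
  | 2, 1 => w 0 - w 1 - w 2 - w 4 - w 6
  | 2, 2 => w 0 - w 2 - w 3 - w 4 - w 6
  | 2, 3 => w 0 - w 1 - w 3 - w 4 - w 6
  | 2, 4 => - w 4 - w 6 - w 7
  | 2, 5 => - w 6
  | 2, 6 => w 5 - w 6
  | 2, 7 => w 4 - w 5 + w 6
  | 3, 0 => - w 3 + 2%:Z * w 4 + w 5 - 2%:Z * w 6 + w 7
  | 3, 1 => w 0 - w 1 - w 2 - w 3 - w 6
  | 3, 2 => - w 0 + w 1 + w 4 + w 5
  | 3, 3 => w 0 - w 3 - w 6 + w 7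
  | 3, 4 => - w 6
  | 3, 5 => w 4 + w 7
  | 3, 6 => w 4 - w 6
  | 3, 7 => - w 4 - w 5 + w 6 - w 7
  | 4, 0 => w 0 - w 1 + w 2 - 3%:Z * w 3 - w 4 - w 5 - 2%:Z * w 6 - w 7
  | 4, 1 => w 0 - w 1 - w 3 - w 4 - w 6
  | 4, 2 => - w 3
  | 4, 3 => w 2 - w 3
  | 4, 4 => w 0 - w 3 - w 4 - w 5 - w 6
  | 4, 5 => w 0 - w 1 - w 3 - w 5 - w 6
  | 4, 6 => - w 3 - w 6 - w 7
  | 4, 7 => - w 2 + w 3 + w 6
  | 5, 0 => - 2%:Z * w 2 - 2%:Z * w 3 - w 5 - 2%:Z * w 6 - 3%:Z * w 7
  | 5, 1 => w 0 - w 1 - w 2 - w 3 - w 4 - w 5 - w 6 - w 7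
  | 5, 2 => - w 2 - w 3 - w 7
  | 5, 3 => - w 3 - w 6 - w 7
  | 5, 4 => - w 0 + w 1 - w 7
  | 5, 5 => w 0 - w 2 - w 3 - w 5 - w 6
  | 5, 6 => - w 2 - w 6 - w 7
  | 5, 7 => w 2 + w 3 + w 6 + w 7
  | 6, 0 => - 3%:Z * w 0 + 3%:Z * w 1 + 2%:Z * w 2 + w 3 + w 4 + w 5 - w 6 - w 7
  | 6, 1 => - w 6
  | 6, 2 => - w 0 + w 1 - w 7
  | 6, 3 => - w 0 + w 1 + w 2 + w 5
  | 6, 4 => - w 0 + w 1 + w 2 + w 3
  | 6, 5 => - w 0 + w 1 + w 2 + w 4
  | 6, 6 => w 1 - w 6
  | 6, 7 => 2%:Z * w 0 - 2%:Z * w 1 - w 2 - w 3 - w 4 - w 5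
  | 7, 0 => - 2%:Z * w 0 + 2%:Z * w 1 + w 2 - w 3 + w 4 + 3%:Z * w 5 + w 6 - w 7
  | 7, 1 => - w 0 + w 1 + w 5 - w 7
  | 7, 2 => - w 0 + w 1 + w 2 + w 5 + w 6
  | 7, 3 => w 5
  | 7, 4 => - w 0 + w 1 + w 2 + w 4 + w 5
  | 7, 5 => - w 3 + w 5
  | 7, 6 => - w 0 + w 1 + w 4 + w 5 + w 6
  | 7, 7 => 2%:Z * w 0 - w 1 - w 2 - w 4 - 2%:Z * w 5 - w 6 + w 7
  | _, _ => 0 end.
Definition g8 (i j : nat) : int :=
  match i, j with
  | 0, 0 => 4
  | 0, 1 => -2
  | 0, 2 => -2
  | 0, 3 => -2
  | 0, 4 => -2
  | 0, 5 => -2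
  | 0, 6 => -2
  | 0, 7 => 1
  | 1, 0 => -2
  | 1, 1 => 2
  | 1, 2 => 1
  | 1, 3 => 1
  | 1, 4 => 1
  | 1, 5 => 1
  | 1, 6 => 1
  | 1, 7 => 0
  | 2, 0 => -2
  | 2, 1 => 1
  | 2, 2 => 2
  | 2, 3 => 1
  | 2, 4 => 1
  | 2, 5 => 1
  | 2, 6 => 1
  | 2, 7 => 0
  | 3, 0 => -2
  | 3, 1 => 1
  | 3, 2 => 1
  | 3, 3 => 2
  | 3, 4 => 1
  | 3, 5 => 1
  | 3, 6 => 1
  | 3, 7 => 0
  | 4, 0 => -2
  | 4, 1 => 1
  | 4, 2 => 1
  | 4, 3 => 1
  | 4, 4 => 2
  | 4, 5 => 1
  | 4, 6 => 1
  | 4, 7 => 0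
  | 5, 0 => -2
  | 5, 1 => 1
  | 5, 2 => 1
  | 5, 3 => 1
  | 5, 4 => 1
  | 5, 5 => 2
  | 5, 6 => 1
  | 5, 7 => 0
  | 6, 0 => -2
  | 6, 1 => 1
  | 6, 2 => 1
  | 6, 3 => 1
  | 6, 4 => 1
  | 6, 5 => 1
  | 6, 6 => 2
  | 6, 7 => 0
  | 7, 0 => 1
  | 7, 1 => 0
  | 7, 2 => 0
  | 7, 3 => 0
  | 7, 4 => 0
  | 7, 5 => 0
  | 7, 6 => 0
  | 7, 7 => 2
  | _, _ => 0 end.

Definition bi8 (i j : nat) : int :=
  if i == 7%N then 0 else
  if i == 0%N then (if j == 0%N then 2 else 0)
  else if j == i then 1 else if j == 0%N then -1 else 0.
Definition hm8 (i j : nat) : R := if i == 7%N then 2^-1 else 0.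
Definition bp8 (i j : nat) : R :=
  if j == 0%N then (if i == 7%N then - (7 / 2) else 2^-1)
  else if j == 7%N then (if i == 7%N then 2 else 0)
  else if i == j then 1 else if i == 7%N then -1 else 0.
Definition B8 : 'M[R]_8 := ZR (mxn 8 8 bi8) + mxn 8 8 hm8.
Definition Bp8 : 'M[R]_8 := mxn 8 8 bp8.

Lemma B8E : B8 = mxn 8 8 (fun i j => (bi8 i j)%:~R + hm8 i j).
Proof. by apply/matrixP => i j; rewrite !mxE. Qed.

Lemma half_min (x : 'rV[R]_8) : halfvec x -> 2 <= dotv x x.
Proof.
move=> hx; have h i : 4^-1 <= x ord0 i * x ord0 i.
  have /intrP [n hn] := hx i.
  have -> : x ord0 i = n%:~R + 2^-1 by rewrite -hn subrK.
  have : 0 <= n * n + n by nia.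
  rewrite -(ler_int R) rmorphD rmorphM /= => h.
  have -> : (n%:~R + 2^-1) * (n%:~R + 2^-1) = (n%:~R * n%:~R + n%:~R) + 4^-1 :> R by field.
  by rewrite lerDr.
apply: le_trans (ler_sum _ (fun i _ => h i)); rewrite sumr_const card_ord.
have -> : (4^-1 : R) *+ 8 = 2 by rewrite -mulr_natr; field.
by [].
Qed.

Lemma id8 (w : nat -> int) : 2%:Z *: (mxn 8 8 (a8 w) *m mxn 8 8 g8 *m (mxn 8 8 (a8 w))^T) =
       nsum 8 (fun i => nsum 8 (fun j => w i * g8 i j * w j)) *: mxn 8 8 g8.
Proof.
rewrite mxn_tr !mxn_mul !mxn_scale; apply: mxn_eq => i j Hi Hj.
natcase i Hi; natcase j Hj.
all: cbv beta iota delta [nsum a8 g8].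
all: ring.
Qed.

Lemma E8_facts :
 [/\ (forall x, E8_set x <-> exists u : 'rV[int]_8, x = ZR u *m B8),
     B8 *m Bp8 = 1%:M, (forall x : 'rV[R]_8, x *m Bp8 *m B8 = x) &
     [/\ ZR (mxn 8 8 g8) = B8 *m B8^T, (forall w, 2%:Z *: (mxn 8 8 (a8 w) *m mxn 8 8 g8 *m (mxn 8 8 (a8 w))^T) =
       nsum 8 (fun i => nsum 8 (fun j => w i * g8 i j * w j)) *: mxn 8 8 g8),
       \det (mxn 8 8 g8) != 0 & (exists p, (p < 8)%N /\ g8 p p = 2)]].
Proof.
have hBBp : B8 *m Bp8 = 1%:M.
  rewrite B8E /Bp8 mxn_mul one_mxn; apply: mxn_eq => i j Hi Hj.
  natcase i Hi; natcase j Hj; cbv beta iota delta [nsum bi8 hm8 bp8] => /=; by field.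
have hWP (x : 'rV[R]_8) : x *m Bp8 *m B8 = x by rewrite -mulmxA (mulmx1C hBBp) mulmx1.
have hG : ZR (mxn 8 8 g8) = B8 *m B8^T.
  rewrite B8E ZR_mxn mxn_tr mxn_mul; apply: mxn_eq => i j Hi Hj.
  natcase i Hi; natcase j Hj; cbv beta iota delta [nsum bi8 hm8 g8] => /=; by field.
split => //.
- move=> x; split.
  + case=> hih hs.
    pose X := fun j => x ord0 (inord j).
    have hx : x = mxn 1 8 (fun _ j => X j) := rowE_mxn x.
    have hcs : coord_sum x = nsum 8 X by rewrite [in LHS]hx coord_sum_mxn.
    have xB : x *m Bp8 = mxn 1 8 (fun _ j => if j == 0%N then coord_sum x / 2 - 4 * X 7%N
        else if j == 7%N then 2 * X 7%N else X j - X 7%N).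
      rewrite hcs [in LHS]hx /Bp8 mxn_mul; apply: mxn_eq => i j Hi Hj.
      natcase i Hi; natcase j Hj; cbv beta iota delta [nsum bp8] => /=; by field.
    have [v hv] : exists v, x *m Bp8 = ZR v.
      apply: toZ; rewrite xB => j; rewrite mxE.
      case: hih => [hi|hh].
      * case: eqP => _.
          by apply: rpredB => //; apply: rpredM; [exact: natr_int | exact: hi].
        case: eqP => _; first by apply: rpredM; [exact: natr_int | exact: hi].
        by apply: rpredB; exact: hi.
      * have h7 := hh (inord 7).
        case: eqP => _.
          have -> : 4 * X 7%N = 4 * (X 7%N - 2^-1) + 2 by field.
          apply: rpredB => //; apply: rpredD; last exact: natr_int.
          by apply: rpredM; [exact: natr_int | exact: h7].
        case: eqP => _.
          have -> : 2 * X 7%N = 2 * (X 7%N - 2^-1) + 1 by field.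
          apply: rpredD; last exact: int_num1.
          by apply: rpredM; [exact: natr_int | exact: h7].
        have -> : X j - X 7%N = (X j - 2^-1) - (X 7%N - 2^-1) by field.
        by apply: rpredB; [exact: hh | exact: h7].
    by exists v; rewrite -hv hWP.
  + case=> u ->.
    set U := fun j => u ord0 (inord j).
    have hu : ZR u = mxn 1 8 (fun _ j => (U j)%:~R) by rewrite {1}(rowE_mxnZ u) ZR_mxn.
    have [t ht] : exists t, U 7%N = 2 * t \/ U 7%N = 2 * t + 1.
      exists (U 7%N %/ 2)%Z; have := divz_eq (U 7%N) 2; have := modz_ge0 (U 7%N) (isT : (2:int) != 0);
      have := ltz_pmod (U 7%N) (isT : (0:int) < 2); lia.
    have xE : ZR u *m B8 = ZR (u *m mxn 8 8 bi8) + mxn 1 8 (fun _ _ => (U 7%N)%:~R / 2).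
      rewrite /B8 mulmxDr map_mxM; congr (_ + _); rewrite hu mxn_mul; apply: mxn_eq => i j Hi Hj.
      cbv beta iota delta [nsum hm8] => /=; by field.
    split.
    * rewrite xE; case: ht => ht; [left | right] => j; rewrite !mxE ht ?rmorphD ?rmorphM /=.
        have -> : (2 * t%:~R) / 2 = t%:~R :> R by field.
        by rewrite rpredD ?intr_int.
      have -> : (2%:~R * t%:~R + 1) / 2 = t%:~R + 2^-1 :> R by field.
      by rewrite addrA addrK rpredD ?intr_int.
    * rewrite B8E hu mxn_mul coord_sum_mxn.
      apply/intrP; exists (U 0%N + 2 * U 7%N).
      cbv beta iota delta [nsum bi8 hm8] => /=; by field.
split => //.
- exact: id8.
- exact: detG_sq hG hBBp.
- by exists 1%N.
Qed.

End P5.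


Unset Implicit Arguments.

Theorem lemma4p8 (R : realType) (L : lat) (l : R) :
  is_min_norm (@lat_set R L) l ->
  forall z : 'rV[R]_(amb L), lat_set z -> z != 0 ->
  exists2 n : nat, (n%:R : R) = (normv z / l) ^+ ldim L &
    has_lattice_code (@lat_space R L) (@lat_set R L) n.
Proof.
case: L l => l hmin z Sz nz /=.
- have [hS hBBp hWB hWP [hG hid hdet hp]] := A1_facts R.
  apply: (main_gen (B := B1 R) (Bp := Bp1 R) (g := g1) (af := af1)) => //.
  move=> x [hi hs] nx; apply: even_min => //; rewrite hs mul0r; exact: int_num0.
- have [hS hBBp hWB hWP [hG hid hdet hp]] := A2_facts R.
  apply: (main_gen (B := B2 R) (Bp := Bp2 R) (g := g2) (af := af2)) => //.
  move=> x [hi hs] nx; apply: even_min => //; rewrite hs mul0r; exact: int_num0.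
- have [hS hBBp hWP [hG hid hdet hp]] := D4_facts R.
  apply: (main_gen (B := B4 R) (Bp := Bp4 R) (g := g4) (af := a4)) => //.
  move=> x [hi hs] nx; exact: even_min.
- have [hS hBBp hWP [hG hid hdet hp]] := E8_facts R.
  apply: (main_gen (B := B8 R) (Bp := Bp8 R) (g := g8) (af := a8)) => //.
  move=> x [[hi|hh] hs] nx; [exact: even_min | exact: half_min].
Qed.
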